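(* Let $\Omega\subset\mathbb{R}^2$ be a bounded domain, $X\subset\overline{\Omega}$ finite with $X\setminus\partial\Omega\subset\mathrm{int}(\mathrm{conv}(X\cap\partial\Omega))$, and $f_X$ a discrete load on $X$. Assume $(\mathbf{s},\mathbf{q},\mathbf{r})\in\mathbb{R}^{3\times m}$ solves $(\mathcal{P}_X)$ and $(\mathbf{u}_1,\mathbf{u}_2,\mathbf{w})\in\mathbb{R}^{3\times n}$ (with some slack vectors) solves $(\mathcal{P}_X^* )$. Then the pair $$\mathbf{z}=\tfrac12\mathbf{w},\qquad\hat{\mathbf{s}}=\mathbf{J}(\mathbf{z})\mathbf{s}$$ solves problem $(\mathrm{MVGS}_X)$, and $\mathcal{V}_{X,\min}=\mathcal{Z}_X$.
   Context: Discrete setting: $\bar n=\#X$, $n=\#(X\setminus\partial\Omega)$, enumeration $\chi:\{1,\dots,n\}\to X\setminus\partial\Omega$; $m=\bar n(\bar n-1)/2$, enumeration $k\mapsto\{\chi_-(k),\chi_+(k)\}$ of unordered pairs of distinct points of $X$. $f_i=f_X(\{\chi(i)\})$, $l_k=|\chi_+(k)-\chi_-(k)|$. Vectors in $\mathbb{R}^n$ are identified with functions on $X$ vanishing on $X\cap\partial\Omega$. $\mathbf{B}_1,\mathbf{B}_2,\mathbf{D}\in\mathbb{R}^{m\times n}$: $(\mathbf{B}_1\mathbf{u}_1+\mathbf{B}_2\mathbf{u}_2)_k=(u(\chi_+(k))-u(\chi_-(k)))\cdot(\chi_+(k)-\chi_-(k))/l_k$ (with $u=(u_1,u_2)$ in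 a fixed Cartesian basis), $(\mathbf{D}\mathbf{w})_k=w(\chi_+(k))-w(\chi_-(k))$. $\mathrm{K}=\{(t_1,t_2,t_3):t_1,t_2\ge0,2t_1t_2\ge t_3^2\}$. $(\mathcal{P}_X)$: $\inf\{\mathbf{l}^\top\mathbf{s}+2\mathbf{l}^\top\mathbf{r}:\mathbf{s},\mathbf{r}\in\mathbb{R}^m_+,\mathbf{q}\in\mathbb{R}^m,\mathbf{B}_1^\top\mathbf{s}=\mathbf{B}_2^\top\mathbf{s}=\mathbf{0},\mathbf{D}^\top\mathbf{q}=\mathbf{f},(r_k,s_k,q_k)\in\mathrm{K}\ \forall k\}$. $(\mathcal{P}_X^* )$: $\sup\{\mathbf{f}^\top\mathbf{w}:\mathbf{t}_2+\mathbf{B}_1\mathbf{u}_1+\mathbf{B}_2\mathbf{u}_2=\mathbf{l},\mathbf{t}_3+\mathbf{D}\mathbf{w}=\mathbf{0},\mathbf{t}_1=2\mathbf{l},(t_{1;k},t_{2;k},t_{3;k})\in\mathrm{K}\ \forall k\}$ over $\mathbf{u}_1,\mathbf{u}_2,\mathbf{w}\in\mathbb{R}^n$, $\mathbf{t}_1,\mathbf{t}_2\in\mathbb{R}^m_+$, $\mathbf{t}_3\in\mathbb{R}^m$. It is known that $\min\mathcal{P}_X=\max\mathcal{P}_X^*=:\mathcal{Z}_X$. For $\mathbf{z}\in\mathbb{R}^n$: $\Delta_k(\mathbf{z})=(\mathbf{D}\mathbf{z})_k/l_k$, $\mathbf{J}(\mathbf{z})$ diagonal with $J_{kk}(\mathbf{z})=\sqrt{1+\Delta_k(\mathbf{z})^2}$,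 $\hat l_k(\mathbf{z})=J_{kk}(\mathbf{z})l_k$. $(\mathrm{MVGS}_X)$: $\mathcal{V}_{X,\min}=\inf\{\sum_k\hat l_k(\mathbf{z})\hat s_k:\mathbf{z}\in\mathbb{R}^n,\hat{\mathbf{s}}\in\mathbb{R}^m_+,\ \mathbf{B}_1^\top\mathbf{s}=\mathbf{0},\mathbf{B}_2^\top\mathbf{s}=\mathbf{0},\mathbf{D}^\top\mathbf{q}=\mathbf{f}\text{ where }s_k=\hat s_k/J_{kk}(\mathbf{z}),\ q_k=\Delta_k(\mathbf{z})\hat s_k/J_{kk}(\mathbf{z})\}$. *)

(* Defs.v *)
From HB Require Import structures.
From mathcomp Require Import all_boot all_order all_algebra.
From mathcomp Require Import all_classical all_reals all_analysis.
Set Implicit Arguments. Unset Strict Implicit. Unset Printing Implicit Defensive.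
Import Order.TTheory GRing.Theory Num.Theory.
Import numFieldNormedType.Exports.
Local Open Scope classical_set_scope.
Local Open Scope ring_scope.

Definition xc (R : realType) (x : 'rV[R]_2) : R := x ord0 ord0.
Definition yc (R : realType) (x : 'rV[R]_2) : R := x ord0 ord_max.

Definition bdry (R : realType) (A : set 'rV[R]_2) : set 'rV[R]_2 :=
  closure A `\` interior A.

Definition conv_pts (R : realType) (N : nat) (p : 'I_N -> 'rV[R]_2)
  (B : 'I_N -> Prop) : set 'rV[R]_2 :=
  [set x | exists c : 'I_N -> R,
     (forall i, 0 <= c i) /\ (forall i, ~ B i -> c i = 0) /\
     \sum_i c i = 1 /\ x = \sum_i c i *: p i].

Definition inK (R : realType) (t1 t2 t3 : R) : Prop :=
  0 <= t1 /\ 0 <= t2 /\ t3 ^+ 2 <= 2 * t1 * t2.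

Definition nonnegv (R : realType) (k : nat) (v : 'cV[R]_k) : Prop :=
  forall i, 0 <= v i ord0.

Definition dotv (R : realType) (k : nat) (a b : 'cV[R]_k) : R :=
  \sum_i a i ord0 * b i ord0.

Section Discrete.
Variable R : realType.
Variables (nbar n m : nat).
(* X = {p 0, ..., p (nbar-1)} *)
Variable p : 'I_nbar -> 'rV[R]_2.
(* enumeration chi of the interior points X \ dOmega *)
Variable chi : 'I_n -> 'I_nbar.
(* enumeration k |-> {chim k, chip k} of unordered pairs *)
Variables chim chip : 'I_m -> 'I_nbar.
(* the discrete load f_X, given by its value at each point of X *)
Variable fX : 'I_nbar -> R.

Definition dx (k : 'I_m) : R := xc (p (chip k)) - xc (p (chim k)).
Definition dy (k : 'I_m) : R := yc (p (chip k)) - yc (p (chim k)).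

Definition ell (k : 'I_m) : R := Num.sqrt (dx k ^+ 2 + dy k ^+ 2).
Definition lvec : 'cV[R]_m := \col_k ell k.

Definition fvec : 'cV[R]_n := \col_i fX (chi i).

(* value at chi_+(k) minus value at chi_-(k) of the function on X
   (vanishing on the boundary) associated with the i-th unit vector *)
Definition incid (k : 'I_m) (i : 'I_n) : R :=
  (chip k == chi i)%:R - (chim k == chi i)%:R.

Definition B1 : 'M[R]_(m, n) := \matrix_(k, i) (incid k i * dx k / ell k).
Definition B2 : 'M[R]_(m, n) := \matrix_(k, i) (incid k i * dy k / ell k).
Definition Dm : 'M[R]_(m, n) := \matrix_(k, i) incid k i.

Definition P_feasible (s q r : 'cV[R]_m) : Prop :=
  nonnegv s /\ nonnegv r /\
  B1^T *m s = 0 /\ B2^T *m s = 0 /\ Dm^T *m q = fvec /\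
  (forall k, inK (r k ord0) (s k ord0) (q k ord0)).

Definition P_obj (s r : 'cV[R]_m) : R := dotv lvec s + 2 * dotv lvec r.

Definition P_solves (s q r : 'cV[R]_m) : Prop :=
  P_feasible s q r /\
  forall s' q' r', P_feasible s' q' r' -> P_obj s r <= P_obj s' r'.

Definition D_feasible (u1 u2 w : 'cV[R]_n) (t1 t2 t3 : 'cV[R]_m) : Prop :=
  nonnegv t1 /\ nonnegv t2 /\
  t2 + B1 *m u1 + B2 *m u2 = lvec /\ t3 + Dm *m w = 0 /\ t1 = 2 *: lvec /\
  (forall k, inK (t1 k ord0) (t2 k ord0) (t3 k ord0)).

Definition D_obj (w : 'cV[R]_n) : R := dotv fvec w.

Definition D_solves (u1 u2 w : 'cV[R]_n) : Prop :=
  exists t1 t2 t3, D_feasible u1 u2 w t1 t2 t3 /\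
  forall u1' u2' w' t1' t2' t3', D_feasible u1' u2' w' t1' t2' t3' ->
    D_obj w' <= D_obj w.

Definition ZX : R :=
  inf [set v : R | exists s q r, P_feasible s q r /\ v = P_obj s r].

Definition Delta (z : 'cV[R]_n) (k : 'I_m) : R := (Dm *m z) k ord0 / ell k.
Definition Jkk (z : 'cV[R]_n) (k : 'I_m) : R := Num.sqrt (1 + Delta z k ^+ 2).
Definition Jmat (z : 'cV[R]_n) : 'M[R]_m := diag_mx (\row_k Jkk z k).
Definition lhat (z : 'cV[R]_n) (k : 'I_m) : R := Jkk z k * ell k.

Definition MVGS_feasible (z : 'cV[R]_n) (sh : 'cV[R]_m) : Prop :=
  let s := \col_k (sh k ord0 / Jkk z k) in
  let q := \col_k (Delta z k * sh k ord0 / Jkk z k) in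
  nonnegv sh /\ B1^T *m s = 0 /\ B2^T *m s = 0 /\ Dm^T *m q = fvec.

Definition MVGS_obj (z : 'cV[R]_n) (sh : 'cV[R]_m) : R :=
  \sum_k lhat z k * sh k ord0.

Definition MVGS_solves (z : 'cV[R]_n) (sh : 'cV[R]_m) : Prop :=
  MVGS_feasible z sh /\
  forall z' sh', MVGS_feasible z' sh' -> MVGS_obj z sh <= MVGS_obj z' sh'.

Definition Vmin : R :=
  inf [set v : R | exists z sh, MVGS_feasible z sh /\ v = MVGS_obj z sh].

End Discrete.

(* Main.v *)
Require Import Defs.
From HB Require Import structures.
From mathcomp Require Import all_boot all_order all_algebra.
From mathcomp Require Import all_classical all_reals all_analysis.
From mathcomp Require Import ring lra.
Import Order.TTheory GRing.Theory Num.Theory.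
Import numFieldNormedType.Exports.
Local Open Scope classical_set_scope.
Local Open Scope ring_scope.

Set Implicit Arguments. Unset Strict Implicit.

Section Farkas.
Variables (R : realFieldType) (V : lmodType R) (dot : V -> V -> R).
Hypothesis dotDl : forall x y z, dot (x + y) z = dot x z + dot y z.
Hypothesis dotZl : forall a x z, dot (a *: x) z = a * dot x z.
Hypothesis dotDr : forall x y z, dot z (x + y) = dot z x + dot z y.
Hypothesis dotZr : forall a x z, dot z (a *: x) = a * dot z x.
Hypothesis dot_base : forall b, b != 0 -> exists y, 0 < dot y b.

Lemma dotBl x y z : dot (x - y) z = dot x z - dot y z.
Proof. by rewrite -scaleN1r dotDl dotZl mulN1r. Qed.
Lemma dotBr x y z : dot z (x - y) = dot z x - dot z y.
Proof. by rewrite -scaleN1r dotDr dotZr mulN1r. Qed.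

Lemma farkas (I : eqType) (s : seq I) : forall (A : I -> V) (b : V), uniq s ->
  (exists c : I -> R, (forall i, 0 <= c i) /\ b = \sum_(i <- s) c i *: A i) \/
  (exists y, (forall i, i \in s -> dot y (A i) <= 0) /\ 0 < dot y b).
Proof.
elim: s => [|i s IH] A b Hu.
  have [->|bn0] := eqVneq b 0.
    by left; exists (fun _ => 0); split => //; rewrite big_nil.
  by right; have [y Hy] := dot_base bn0; exists y; split.
move: Hu => /= /andP [his Hu].
case: (IH A b Hu) => [[c [Hc Hb]]|[y [Hy Hyb]]].
  left; exists (fun j => if j == i then 0 else c j); split.
    by move=> j; case: eqP.
  rewrite big_cons eqxx scale0r add0r Hb; apply: eq_big_seq => j js.
  by case: eqP => // E; move: his; rewrite -E js.
have [Hai|Hai] := lerP (dot y (A i)) 0.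
  right; exists y; split => // j; rewrite inE => /orP [/eqP ->|js] //.
  exact: Hy.
set al := dot y (A i).
pose A' j := al *: A j - dot y (A j) *: A i.
pose b' := al *: b - dot y b *: A i.
case: (IH A' b' Hu) => [[mu [Hmu Hb']]|[y' [Hy' Hyb']]].
  pose ka := (dot y b - \sum_(j <- s) mu j * dot y (A j)) / al.
  left; exists (fun j => if j == i then ka else mu j); split.
    move=> j0; case: eqP => _ //; apply: divr_ge0; last exact: ltW.
    rewrite subr_ge0; apply: (@le_trans _ _ 0); last exact: ltW.
    rewrite big_seq -oppr_ge0 -sumrN; apply: sumr_ge0 => j js.
    by rewrite oppr_ge0 mulr_ge0_le0 // Hy.
  rewrite big_cons eqxx.
  rewrite (eq_big_seq (fun j => mu j *: A j)); last first.
    by move=> j js; case: eqP => // E; move: his; rewrite -E js.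
  have alne : al != 0 by rewrite gt_eqF.
  apply: (@scalerI _ _ al alne).
  rewrite scalerDr scalerA (mulrC al) /ka -mulrA mulVf // mulr1.
  have -> : al *: b = b' + dot y b *: A i by rewrite /b' subrK.
  rewrite Hb' scalerBl scaler_sumr scaler_suml [LHS]addrC -[RHS]addrA.
  congr (_ + _); rewrite -sumrN -big_split /=; apply: eq_bigr => j _.
  by rewrite /A' scalerBr !scalerA addrC (mulrC al).
right; exists (al *: y' - dot y' (A i) *: y); split.
  move=> j; rewrite inE => /orP [/eqP ->|js].
    by rewrite dotBl !dotZl /al mulrC subrr.
  have := Hy' j js; rewrite /A' dotBr !dotZr dotBl !dotZl.
  by rewrite (mulrC (dot y (A j))).
move: Hyb'; rewrite /b' dotBr !dotZr dotBl !dotZl.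
by rewrite (mulrC (dot y b)).
Qed.
End Farkas.
Section Aux.
Variable R : realFieldType.

Lemma quad_eps (a b c : R) : 0 <= a -> 0 <= c -> (0 < a \/ 0 < b) ->
  exists e, 0 < e /\ forall x, 0 < x -> x <= e -> 0 <= a + b * x - c * x ^+ 2.
Proof.
move=> a0 c0 [apos|bpos].
  have Hd : 0 < a + `|b| + c by have := normr_ge0 b; lra.
  exists (a / (a + `|b| + c)); split; first exact: divr_gt0.
  move=> x x0 xe.
  have He : a / (a + `|b| + c) * (a + `|b| + c) = a by rewrite divfK // gt_eqF.
  have x1 : x <= 1.
    apply: (le_trans xe); rewrite ler_pdivrMr // mul1r; have := normr_ge0 b; lra.
  have nb : - `|b| <= b by have := ler_norm (- b); rewrite normrN; lra.
  have bx : - `|b| * x <= b * x by rewrite ler_wpM2r // ltW.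
  have xx : x ^+ 2 <= x by rewrite expr2 ger_pMr.
  have cx : c * x ^+ 2 <= c * x by rewrite ler_wpM2l.
  have : x * (a + `|b| + c) <= a / (a + `|b| + c) * (a + `|b| + c).
    by rewrite ler_wpM2r // ltW.
  rewrite He.
  nra.
have Hd : 0 < c + 1 by lra.
exists (b / (c + 1)); split; first exact: divr_gt0.
move=> x x0 xe.
have : x * (c + 1) <= b by rewrite -ler_pdivlMr.
nra.
Qed.

Lemma common_eps (I : eqType) (s : seq I) (P : I -> R -> Prop) :
  (forall i, i \in s -> exists e, 0 < e /\ forall x, 0 < x -> x <= e -> P i x) ->
  exists e, 0 < e /\ forall i, i \in s -> forall x, 0 < x -> x <= e -> P i x.
Proof.
elim: s => [|i s IH] H.
  by exists 1; split => //.
have [e1 [e1p H1]] := H i (mem_head _ _).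
have [e2 [e2p H2]] : exists e, 0 < e /\ forall j, j \in s -> forall x, 0 < x -> x <= e -> P j x.
  by apply: IH => j js; apply: H; rewrite inE js orbT.
exists (Num.min e1 e2); split; first by rewrite lt_min e1p e2p.
move=> j; rewrite inE => /orP [/eqP ->|js] x x0; rewrite le_min => /andP [xe1 xe2].
  exact: H1.
exact: H2.
Qed.

Lemma cone_pair (r s q a b c : R) : 0 <= r -> 0 <= s -> q ^+ 2 <= 2 * r * s ->
  0 <= a -> 0 <= b -> c ^+ 2 <= 2 * a * b -> 0 <= r * a + s * b + q * c.
Proof.
move=> r0 s0 hq a0 b0 hc.
have ra : 0 <= r * a by rewrite mulr_ge0.
have sb : 0 <= s * b by rewrite mulr_ge0.
have h4 : (q * c) ^+ 2 <= 4 * (r * a) * (s * b).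
  have -> : 4 * (r * a) * (s * b) = (2 * r * s) * (2 * a * b) by ring.
  rewrite exprMn; apply: ler_pM => //; exact: sqr_ge0.
rewrite leNgt; apply/negP => H.
have : (r * a + s * b) ^+ 2 < (q * c) ^+ 2.
  have h1 : r * a + s * b < - (q * c) by lra.
  rewrite -(sqrrN (q * c)); rewrite ltr_pXn2r //; first by rewrite nnegrE; lra.
  by rewrite nnegrE; lra.
have e : (r * a + s * b) ^+ 2 = (r * a - s * b) ^+ 2 + 4 * (r * a) * (s * b) by ring.
have := sqr_ge0 (r * a - s * b).
rewrite e; set X := (r * a - s * b) ^+ 2; set Y := 4 * (r * a) * (s * b).
set Z := (q * c) ^+ 2; move=> h5 h6.
have h7 : X + Y < Y by apply: (lt_le_trans h6 h4).
lra.
Qed.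

Lemma cone_align (r s q a b c : R) : 0 <= r -> 0 <= s -> q ^+ 2 <= 2 * r * s ->
  0 <= a -> 0 <= b -> c ^+ 2 <= 2 * a * b -> r * a + s * b + q * c = 0 ->
  q * a = - (c * s).
Proof.
move=> r0 s0 hq a0 b0 hc H.
have : (q * a + c * s) ^+ 2 <= 0.
  have sa : 0 <= s * a by rewrite mulr_ge0.
  have e : (q * a + c * s) ^+ 2 = q ^+ 2 * a ^+ 2 + 2 * (q * c) * (s * a) + c ^+ 2 * s ^+ 2 by ring.
  have h1 : q ^+ 2 * a ^+ 2 <= 2 * r * s * a ^+ 2 by rewrite ler_wpM2r // sqr_ge0.
  have h2 : c ^+ 2 * s ^+ 2 <= 2 * a * b * s ^+ 2 by rewrite ler_wpM2r // sqr_ge0.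
  have h3 : 2 * r * s * a ^+ 2 + 2 * (q * c) * (s * a) + 2 * a * b * s ^+ 2 = 2 * (s * a) * (r * a + s * b + q * c) by ring.
  rewrite H mulr0 in h3; lra.
rewrite le_eqVlt => /orP [|]; last by rewrite ltNge sqr_ge0.
by rewrite sqrf_eq0 addr_eq0 => /eqP.
Qed.

End Aux.
Section Dot.
Variable R : realType.

Lemma dotvC k (a b : 'cV[R]_k) : dotv a b = dotv b a.
Proof. by apply: eq_bigr => i _; rewrite mulrC. Qed.

Lemma dotvDr k (a b c : 'cV[R]_k) : dotv a (b + c) = dotv a b + dotv a c.
Proof. by rewrite /dotv -big_split; apply: eq_bigr => i _; rewrite mxE mulrDr. Qed.

Lemma dotvZr k x (a b : 'cV[R]_k) : dotv a (x *: b) = x * dotv a b.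
Proof. by rewrite /dotv mulr_sumr; apply: eq_bigr => i _; rewrite mxE mulrCA. Qed.

Lemma dotvNr k (a b : 'cV[R]_k) : dotv a (- b) = - dotv a b.
Proof. by rewrite /dotv -sumrN; apply: eq_bigr => i _; rewrite mxE mulrN. Qed.

Lemma dotvBr k (a b c : 'cV[R]_k) : dotv a (b - c) = dotv a b - dotv a c.
Proof. by rewrite dotvDr dotvNr. Qed.

Lemma dotv0r k (a : 'cV[R]_k) : dotv a 0 = 0.
Proof. by rewrite /dotv big1 // => i _; rewrite mxE mulr0. Qed.

Lemma dotv0l k (a : 'cV[R]_k) : dotv 0 a = 0.
Proof. by rewrite /dotv big1 // => i _; rewrite mxE mul0r. Qed.

Lemma dotvDl k (a b c : 'cV[R]_k) : dotv (b + c) a = dotv b a + dotv c a.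
Proof. by rewrite (dotvC (b + c)) (dotvC b) (dotvC c) dotvDr. Qed.

Lemma dotvZl k x (a b : 'cV[R]_k) : dotv (x *: b) a = x * dotv b a.
Proof. by rewrite (dotvC (x *: b)) (dotvC b) dotvZr. Qed.

Lemma dotv_trmx k l (A : 'M[R]_(k, l)) a b : dotv (A^T *m a) b = dotv a (A *m b).
Proof.
rewrite /dotv.
under eq_bigr do rewrite mxE big_distrl /=.
rewrite exchange_big /=; apply: eq_bigr => i _.
rewrite mxE big_distrr /=; apply: eq_bigr => j _.
by rewrite mxE mulrCA mulrA.
Qed.

Lemma dotv_row k l (M : 'M[R]_(k, l)) i x : dotv x (row i M)^T = (M *m x) i 0.
Proof. by rewrite /dotv mxE; apply: eq_bigr => j _; rewrite !mxE mulrC. Qed.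

Lemma trmx_mul_sum k l (M : 'M[R]_(k, l)) (v : 'cV[R]_k) :
  M^T *m v = \sum_i v i 0 *: (row i M)^T.
Proof.
apply/matrixP => i j; rewrite !mxE summxE; apply: eq_bigr => a _.
by rewrite !mxE (ord1 j) mulrC.
Qed.

Lemma mulmx_comb k l (M : 'M[R]_(k, l)) (x : 'cV[R]_l) e y i :
  (M *m (x + e *: y)) i 0 = (M *m x) i 0 + e * (M *m y) i 0.
Proof. by rewrite mulmxDr -scalemxAr !mxE. Qed.

Lemma dotv_ge0 k (a : 'cV[R]_k) : 0 <= dotv a a.
Proof. by apply: sumr_ge0 => i _; rewrite -expr2 sqr_ge0. Qed.

Lemma dotv_eq0 k (a : 'cV[R]_k) : dotv a a = 0 -> a = 0.
Proof.
move=> H.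
have H2 : forall i, a i 0 * a i 0 = 0.
  have Hnn : forall i, true -> 0 <= a i 0 * a i 0 by move=> j _; rewrite -expr2 sqr_ge0.
  by move=> i0; exact: (psumr_eq0P Hnn H).
apply/matrixP => i j; rewrite (ord1 j) mxE.
by have /eqP := H2 i; rewrite -expr2 sqrf_eq0 => /eqP.
Qed.

Lemma mxDE a b (A B : 'M[R]_(a, b)) i j : (A + B) i j = A i j + B i j.
Proof. by rewrite mxE. Qed.
Lemma mxNE a b (A : 'M[R]_(a, b)) i j : (- A) i j = - A i j.
Proof. by rewrite mxE. Qed.
Lemma mxBE a b (A B : 'M[R]_(a, b)) i j : (A - B) i j = A i j - B i j.
Proof. by rewrite !mxE. Qed.
Lemma mxZE a b x (A : 'M[R]_(a, b)) i j : (x *: A) i j = x * A i j.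
Proof. by rewrite mxE. Qed.
Lemma mx0E a b i j : (0 : 'M[R]_(a, b)) i j = 0.
Proof. by rewrite mxE. Qed.

End Dot.

Unset Implicit Arguments. Set Strict Implicit.

Lemma fst_sum (U V : nmodType) (I : Type) (r : seq I) (P : pred I) (F : I -> U * V) :
  (\sum_(i <- r | P i) F i).1 = \sum_(i <- r | P i) (F i).1.
Proof. by apply: (big_morph fst). Qed.
Lemma snd_sum (U V : nmodType) (I : Type) (r : seq I) (P : pred I) (F : I -> U * V) :
  (\sum_(i <- r | P i) F i).2 = \sum_(i <- r | P i) (F i).2.
Proof. by apply: (big_morph snd). Qed.

Lemma eqle (R : realType) (x y : R) : x = y -> x <= y. Proof. by move=> ->. Qed.

Section Core.
Variables (R : realType) (n m : nat) (B1 B2 D : 'M[R]_(m, n)) (l : 'cV[R]_m) (f : 'cV[R]_n).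
Hypothesis lpos : forall k, 0 < l k 0.

Definition PF (s q r : 'cV[R]_m) : Prop :=
  nonnegv s /\ nonnegv r /\
  B1^T *m s = 0 /\ B2^T *m s = 0 /\ D^T *m q = f /\
  (forall k, inK (r k 0) (s k 0) (q k 0)).
Definition PO (s r : 'cV[R]_m) : R := dotv l s + 2 * dotv l r.
Definition DF (u1 u2 w : 'cV[R]_n) (t1 t2 t3 : 'cV[R]_m) : Prop :=
  nonnegv t1 /\ nonnegv t2 /\
  t2 + B1 *m u1 + B2 *m u2 = l /\ t3 + D *m w = 0 /\ t1 = 2 *: l /\
  (forall k, inK (t1 k 0) (t2 k 0) (t3 k 0)).
Definition HH (u1 u2 w : 'cV[R]_n) k : R :=
  4 * l k 0 * (l k 0 - (B1 *m u1) k 0 - (B2 *m u2) k 0) - ((D *m w) k 0) ^+ 2.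

Lemma DF_H u1 u2 w t1 t2 t3 : DF u1 u2 w t1 t2 t3 -> forall k, 0 <= HH u1 u2 w k.
Proof.
move=> [_ [_ [E2 [E3 [E1 HK]]]]] k; have [_ [_ hk]] := HK k.
have e2 := congr1 (fun M : 'cV[R]_m => M k 0) E2; have e3 := congr1 (fun M : 'cV[R]_m => M k 0) E3.
move: e2 e3 hk; rewrite E1 !(mxDE, mxZE, mx0E) /HH => e2 e3 hk.
have t3e : t3 k 0 = - (D *m w) k 0 by lra.
have -> : l k 0 - (B1 *m u1) k 0 - (B2 *m u2) k 0 = t2 k 0 by lra.
rewrite t3e sqrrN in hk.
have -> : 4 * l k 0 * t2 k 0 = 2 * (2 * l k 0) * t2 k 0 by ring.
lra.
Qed.

Lemma H_DF u1 u2 w : (forall k, 0 <= HH u1 u2 w k) ->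
  DF u1 u2 w (2 *: l) (l - B1 *m u1 - B2 *m u2) (- (D *m w)).
Proof.
move=> Hk.
have t2nn : forall k, 0 <= (l - B1 *m u1 - B2 *m u2) k 0.
  move=> k; rewrite !(mxDE, mxNE); have := Hk k; rewrite /HH => h.
  have h2 := sqr_ge0 ((D *m w) k 0).
  have : 0 <= 4 * l k 0 * (l k 0 - (B1 *m u1) k 0 - (B2 *m u2) k 0) by lra.
  by rewrite pmulr_rge0 // mulr_gt0.
split; first by move=> k; rewrite mxZE mulr_ge0 // ltW.
split; first exact: t2nn.
split.
  by apply/matrixP => i j; rewrite !(mxDE, mxNE); lra.
split; first by rewrite addNr.
split => // k; split; first by rewrite mxZE mulr_ge0 // ltW.
split; first exact: t2nn.
have := Hk k; rewrite /HH !(mxDE, mxZE, mxNE) sqrrN => h.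
have -> : 2 * (2 * l k 0) * (l k 0 - (B1 *m u1) k 0 - (B2 *m u2) k 0) =
  4 * l k 0 * (l k 0 - (B1 *m u1) k 0 - (B2 *m u2) k 0) by ring.
lra.
Qed.

Lemma weak_id s q r u1 u2 w t1 t2 t3 : PF s q r -> DF u1 u2 w t1 t2 t3 ->
  PO s r - dotv f w = dotv r t1 + dotv s t2 + dotv q t3.
Proof.
move=> [_ [_ [HB1 [HB2 [HDq _]]]]] [_ [_ [E2 [E3 [E1 _]]]]].
have -> : t2 = l - B1 *m u1 - B2 *m u2.
  by rewrite -E2; apply/matrixP => i j; rewrite !(mxDE, mxNE); lra.
have -> : t3 = - (D *m w) by apply/eqP; rewrite -addr_eq0 E3.
rewrite E1 !dotvBr dotvNr dotvZr -!dotv_trmx HB1 HB2 HDq.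
rewrite !dotv0l /PO (dotvC s) (dotvC r); ring.
Qed.


Lemma strong s q r u1 u2 w t1 t2 t3 : PF s q r ->
  (forall s' q' r', PF s' q' r' -> PO s r <= PO s' r') ->
  DF u1 u2 w t1 t2 t3 ->
  (forall u1' u2' w' t1' t2' t3', DF u1' u2' w' t1' t2' t3' -> dotv f w' <= dotv f w) ->
  PO s r <= dotv f w.
Proof.
move=> HPF Popt HDF Dopt.
have HG := @DF_H _ _ _ _ _ _ HDF.
pose G k := HH u1 u2 w k.
pose act := [seq k <- index_enum 'I_m | G k == 0].
pose V := ('cV[R]_n * 'cV[R]_n * 'cV[R]_n)%type.
pose dot (x y : V) := dotv x.1.1 y.1.1 + dotv x.1.2 y.1.2 + dotv x.2 y.2.
pose bet k := (D *m w) k 0 / (2 * l k 0).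
pose A (k : 'I_m) : V := ((row k B1)^T, (row k B2)^T, bet k *: (row k D)^T).
pose b : V := (0, 0, f).
have Lne : forall k, l k 0 != 0 by move=> k; rewrite gt_eqF.
have Wbet : forall k, (D *m w) k 0 = 2 * l k 0 * bet k.
  by move=> k; rewrite /bet mulrC divfK // mulf_neq0 // pnatr_eq0.
have dDl : forall x y z, dot (x + y) z = dot x z + dot y z.
  by move=> x y z; rewrite /dot /= !dotvDl; ring.
have dZl : forall a x z, dot (a *: x) z = a * dot x z.
  by move=> a x z; rewrite /dot /= !dotvZl; ring.
have dDr : forall x y z, dot z (x + y) = dot z x + dot z y.
  by move=> x y z; rewrite /dot /= !dotvDr; ring.
have dZr : forall a x z, dot z (a *: x) = a * dot z x.
  by move=> a x z; rewrite /dot /= !dotvZr; ring.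
have dbase : forall x : V, x != 0 -> exists y, 0 < dot y x.
  move=> [[x1 x2] x3] xn0; exists ((x1, x2), x3); rewrite /dot /=.
  have h1 := dotv_ge0 x1; have h2 := dotv_ge0 x2; have h3 := dotv_ge0 x3.
  rewrite lt_neqAle; apply/andP; split; last by lra.
  apply/eqP => E.
  have e1 : dotv x1 x1 = 0 by lra.
  have e2 : dotv x2 x2 = 0 by lra.
  have e3 : dotv x3 x3 = 0 by lra.
  by move: xn0; rewrite (dotv_eq0 e1) (dotv_eq0 e2) (dotv_eq0 e3) eqxx.
have actu : uniq act by rewrite filter_uniq // index_enum_uniq.
case: (@farkas R _ dot dDl dZl dDr dZr dbase _ act A b actu) => [[c [Hc Hb]]|[d [Hd Hdb]]].
  pose lam : 'cV[R]_m := \col_k (if G k == 0 then c k else 0).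
  have Hsum : \sum_(i <- act) c i *: A i = \sum_k lam k 0 *: A k.
    rewrite big_filter big_mkcond /=; apply: eq_bigr => k _; rewrite mxE.
    by case: ifP => _ //; rewrite scale0r.
  rewrite Hsum in Hb.
  have E1 : 0 = \sum_k lam k 0 *: (row k B1)^T.
    by have := congr1 (fun x : V => x.1.1) Hb; rewrite /= !fst_sum.
  have E2 : 0 = \sum_k lam k 0 *: (row k B2)^T.
    by have := congr1 (fun x : V => x.1.2) Hb; rewrite /= fst_sum snd_sum.
  have E3 : f = \sum_k lam k 0 *: (bet k *: (row k D)^T).
    by have := congr1 (fun x : V => x.2) Hb; rewrite /= snd_sum.
  have HB1l : B1^T *m lam = 0 by rewrite trmx_mul_sum -E1.
  have HB2l : B2^T *m lam = 0 by rewrite trmx_mul_sum -E2.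
  pose q' : 'cV[R]_m := \col_k (lam k 0 * bet k).
  have HDq' : D^T *m q' = f.
    by rewrite trmx_mul_sum E3; apply: eq_bigr => k _; rewrite mxE scalerA.
  pose r' : 'cV[R]_m := \col_k (lam k 0 * bet k ^+ 2 / 2).
  have lam0 : forall k, 0 <= lam k 0 by move=> k; rewrite mxE; case: ifP.
  have HPF' : PF lam q' r'.
    split => //; split.
      by move=> k; rewrite mxE; apply: divr_ge0 => //; apply: mulr_ge0 => //; exact: sqr_ge0.
    split => //; split => //; split => //.
    move=> k; split.
      by rewrite [r' k 0]mxE; apply: divr_ge0 => //; apply: mulr_ge0 => //; exact: sqr_ge0.
    split => //.
    by rewrite [r' k 0]mxE [q' k 0]mxE; apply: eqle; field.
  have Hle := Popt _ _ _ HPF'.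
  have key : forall k, l k 0 * lam k 0 = lam k 0 * (B1 *m u1) k 0 +
      lam k 0 * (B2 *m u2) k 0 + lam k 0 * (l k 0 * bet k ^+ 2).
    move=> k.
    have cs : lam k 0 * G k = 0.
      by rewrite mxE; case: (eqVneq (G k) 0) => [->|_]; rewrite ?mulr0 ?mul0r.
    have e : lam k 0 * G k = 4 * l k 0 * (lam k 0 * (l k 0 - (B1 *m u1) k 0 -
        (B2 *m u2) k 0 - l k 0 * bet k ^+ 2)).
      by rewrite /G /HH Wbet; ring.
    have X0 : lam k 0 * (l k 0 - (B1 *m u1) k 0 - (B2 *m u2) k 0 - l k 0 * bet k ^+ 2) = 0.
      move: cs; rewrite e => /eqP; rewrite !mulf_eq0 pnatr_eq0 (negbTE (Lne k)) /=.
      by move=> /orP [/eqP ->|/eqP ->]; rewrite ?mul0r ?mulr0.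
    by apply/eqP; rewrite -subr_eq0 -X0; apply/eqP; ring.
  have S1 : \sum_k lam k 0 * (B1 *m u1) k 0 = 0.
    by have := dotv_trmx B1 lam u1; rewrite HB1l dotv0l => /esym.
  have S2 : \sum_k lam k 0 * (B2 *m u2) k 0 = 0.
    by have := dotv_trmx B2 lam u2; rewrite HB2l dotv0l => /esym.
  have PO' : PO lam r' = 2 * \sum_k lam k 0 * (l k 0 * bet k ^+ 2).
    rewrite /PO /dotv.
    have -> : \sum_i l i 0 * lam i 0 = \sum_k (lam k 0 * (B1 *m u1) k 0 +
      lam k 0 * (B2 *m u2) k 0 + lam k 0 * (l k 0 * bet k ^+ 2)).
      by apply: eq_bigr => k _; exact: key.
    rewrite !big_split /= S1 S2.
    have -> : \sum_i l i 0 * r' i 0 = (\sum_k lam k 0 * (l k 0 * bet k ^+ 2)) / 2.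
      by rewrite mulr_suml; apply: eq_bigr => k _; rewrite [r' k 0]mxE; ring.
    lra.
  have Sf : dotv f w = 2 * \sum_k lam k 0 * (l k 0 * bet k ^+ 2).
    rewrite -HDq' dotv_trmx /dotv mulr_sumr; apply: eq_bigr => k _.
    by rewrite Wbet [q' k 0]mxE; ring.
  by rewrite PO' -Sf in Hle.
move: d Hd Hdb => [[d1 d2] d3] Hd Hdb.
have Hdb' : 0 < dotv f d3 by move: Hdb; rewrite /dot /= !dotv0r !add0r dotvC.
have Hact : forall k, G k = 0 ->
    (B1 *m d1) k 0 + (B2 *m d2) k 0 + bet k * (D *m d3) k 0 <= 0.
  move=> k Gk; have := Hd k; rewrite mem_filter Gk eqxx mem_index_enum /= => /(_ isT).
  by rewrite /dot /= dotvZr !dotv_row.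
pose FW := dotv f w. pose FD := dotv f d3.
pose del := FD / (`|FW| + 1).
have nFW := normr_ge0 FW.
have delp : 0 < del by rewrite divr_gt0 //; lra.
have delFW : del * FW < FD.
  have h : del * (`|FW| + 1) = FD by rewrite /del divfK // gt_eqF //; lra.
  have : del * FW <= del * `|FW|.
    by apply: ler_wpM2l; [exact: ltW | exact: Num.Theory.ler_norm].
  lra.
pose h1 := d1 - del *: u1. pose h2 := d2 - del *: u2. pose h3 := d3 - del *: w.
pose bk k := - (4 * l k 0 * ((B1 *m h1) k 0 + (B2 *m h2) k 0) +
  2 * (D *m w) k 0 * (D *m h3) k 0).
pose ck k := ((D *m h3) k 0) ^+ 2.
have Hexp : forall e k, HH (u1 + e *: h1) (u2 + e *: h2) (w + e *: h3) k =
    G k + bk k * e - ck k * e ^+ 2.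
  by move=> e k; rewrite /G /HH /bk /ck !mulmx_comb; ring.
have mB : forall (M : 'M[R]_(m, n)) (x y : 'cV[R]_n) k,
    (M *m (x - del *: y)) k 0 = (M *m x) k 0 - del * (M *m y) k 0.
  by move=> M0 x0 y0 k; rewrite mulmxBr -scalemxAr !(mxDE, mxNE, mxZE).
have Hcond : forall k, 0 < G k \/ 0 < bk k.
  move=> k; case: (eqVneq (G k) 0) => [G0|Gn0]; last first.
    by left; rewrite lt_neqAle eq_sym Gn0 HG.
  right; have Ha := Hact k G0.
  have id : bk k = - (4 * l k 0 * ((B1 *m d1) k 0 + (B2 *m d2) k 0 + bet k * (D *m d3) k 0))
     + del * (4 * l k 0 ^+ 2 + (D *m w) k 0 ^+ 2) - del * G k.
    by rewrite /bk /G /HH /h1 /h2 /h3 !mB Wbet; ring.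
  rewrite id G0 mulr0 subr0.
  have p1 : 0 <= - (4 * l k 0 * ((B1 *m d1) k 0 + (B2 *m d2) k 0 + bet k * (D *m d3) k 0)).
    rewrite -mulrN; apply: mulr_ge0; last by lra.
    by apply: mulr_ge0 => //; exact: ltW.
  have p2 : 0 < del * (4 * l k 0 ^+ 2 + (D *m w) k 0 ^+ 2).
    apply: mulr_gt0 => //; have := sqr_ge0 ((D *m w) k 0).
    have : 0 < l k 0 ^+ 2 by rewrite exprn_gt0.
    lra.
  lra.
have [e [e0 He]] := @common_eps R _ (index_enum 'I_m)
  (fun k x => 0 <= G k + bk k * x - ck k * x ^+ 2)
  (fun k _ => quad_eps (HG k) (sqr_ge0 _) (Hcond k)).
have Hk' : forall k, 0 <= HH (u1 + e *: h1) (u2 + e *: h2) (w + e *: h3) k.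
  by move=> k; rewrite Hexp; apply: (He k (mem_index_enum k) e e0 (lexx e)).
have := Dopt _ _ _ _ _ _ (@H_DF _ _ _ Hk').
rewrite dotvDr dotvZr /h3 dotvBr dotvZr -/FW -/FD.
have : 0 < e * (FD - del * FW) by rewrite mulr_gt0 // subr_gt0.
lra.
Qed.

Lemma align s q r u1 u2 w t1 t2 t3 : PF s q r ->
  (forall s' q' r', PF s' q' r' -> PO s r <= PO s' r') ->
  DF u1 u2 w t1 t2 t3 ->
  (forall u1' u2' w' t1' t2' t3', DF u1' u2' w' t1' t2' t3' -> dotv f w' <= dotv f w) ->
  forall k, q k 0 * (2 * l k 0) = (D *m w) k 0 * s k 0.
Proof.
move=> HPF Popt HDF Dopt k.
have Hs := @strong _ _ _ _ _ _ _ _ _ HPF Popt HDF Dopt.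
have Hw := @weak_id _ _ _ _ _ _ _ _ _ HPF HDF.
have HPF' := HPF; have HDF' := HDF.
move: HPF' HDF' => [_ [_ [_ [_ [_ HKq]]]]] [_ [_ [_ [E3 [E1 HKt]]]]].
have nn : forall i, true -> 0 <= r i 0 * t1 i 0 + s i 0 * t2 i 0 + q i 0 * t3 i 0.
  move=> i _; have [a1 [a2 a3]] := HKq i; have [b1 [b2 b3]] := HKt i.
  exact: cone_pair.
have sum0 : \sum_i (r i 0 * t1 i 0 + s i 0 * t2 i 0 + q i 0 * t3 i 0) = 0.
  have e : \sum_i (r i 0 * t1 i 0 + s i 0 * t2 i 0 + q i 0 * t3 i 0) =
    dotv r t1 + dotv s t2 + dotv q t3 by rewrite !big_split.
  apply: le_anti; apply/andP; split; last exact: sumr_ge0.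
  rewrite e -Hw; lra.
have t0 := psumr_eq0P nn sum0 (i := k) erefl.
have [a1 [a2 a3]] := HKq k; have [b1 [b2 b3]] := HKt k.
have := cone_align a1 a2 a3 b1 b2 b3 t0.
have e1 : t1 k 0 = 2 * l k 0 by rewrite E1 mxZE.
have e3 : t3 k 0 = - (D *m w) k 0.
  have := congr1 (fun M : 'cV[R]_m => M k 0) E3; rewrite mxDE mx0E; lra.
rewrite e1 e3 => ->; ring.
Qed.

End Core.

Lemma inf_min (R : realType) (E : set R) x : E x -> (forall y, E y -> x <= y) -> inf E = x.
Proof.
move=> Ex lb; apply: le_anti; apply/andP; split.
  by apply: (ge_inf (ex_intro _ x lb)).
by apply: lb_le_inf; [exists x | exact: lb].
Qed.

Theorem theorem6p2 (R : realType) (Omega : set 'rV[R]_2)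
  (nbar n m : nat) (p : 'I_nbar -> 'rV[R]_2) (chi : 'I_n -> 'I_nbar)
  (chim chip : 'I_m -> 'I_nbar) (fX : 'I_nbar -> R)
  (* Omega is a bounded domain *)
  (HOopen : open Omega) (HOconn : connected Omega) (HOne : Omega !=set0)
  (HObdd : bounded_set Omega)
  (* X = range p is a finite subset of the closure of Omega *)
  (Hpinj : injective p) (HX : forall x, closure Omega (p x))
  (* chi enumerates X \ dOmega *)
  (Hchiinj : injective chi)
  (Hchi : forall x, (exists i, chi i = x) <-> ~ bdry Omega (p x))
  (* k |-> {chim k, chip k} enumerates the unordered pairs of distinct points *)
  (Hm : m = ((nbar * (nbar - 1)) %/ 2)%N)
  (Hpair_ne : forall k, chim k <> chip k)
  (Hpair : forall a b : 'I_nbar, a <> b ->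
     exists k, (chim k = a /\ chip k = b) \/ (chim k = b /\ chip k = a))
  (Hpair_inj : forall k k', [set chim k; chip k] = [set chim k'; chip k'] -> k = k')
  (* X \ dOmega lies in int(conv(X cap dOmega)) *)
  (Hconv : forall x, ~ bdry Omega (p x) ->
     interior (conv_pts p (fun y => bdry Omega (p y))) (p x))
  (s q r : 'cV[R]_m) (u1 u2 w : 'cV[R]_n)
  (HP : P_solves p chi chim chip fX s q r)
  (HD : D_solves p chi chim chip fX u1 u2 w) :
  let z := (2%:R)^-1 *: w in
  let sh := Jmat p chi chim chip z *m s in
  MVGS_solves p chi chim chip fX z sh /\
  Vmin p chi chim chip fX = ZX p chi chim chip fX.
Proof.
move=> z sh.
have o0 : (ord0 : 'I_1) = 0 by [].
pose B1c := B1 p chi chim chip. pose B2c := B2 p chi chim chip.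
pose Dc := Dm R chi chim chip. pose lc := lvec p chim chip. pose fc := fvec chi fX.
have ellpos : forall k, 0 < ell p chim chip k.
  move=> k; rewrite /ell sqrtr_gt0.
  have h1 := sqr_ge0 (dx p chim chip k); have h2 := sqr_ge0 (dy p chim chip k).
  rewrite lt_neqAle addr_ge0 // andbT; apply/eqP => E.
  have ex : dx p chim chip k = 0.
    by apply/eqP; rewrite -sqrf_eq0; apply/eqP; lra.
  have ey : dy p chim chip k = 0.
    by apply/eqP; rewrite -sqrf_eq0; apply/eqP; lra.
  apply: (Hpair_ne k); apply: Hpinj; apply/matrixP => i j.
  rewrite (ord1 i); case: j => [[|[|j]] Hj].
  - have -> : Ordinal Hj = ord0 by apply: val_inj.
    by move: ex; rewrite /dx /xc; lra.
  - have -> : Ordinal Hj = ord_max by apply: val_inj.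
    by move: ey; rewrite /dy /yc; lra.
  - by [].
have lpos : forall k, 0 < lc k 0 by move=> k; rewrite mxE.
have ellne : forall k, ell p chim chip k != 0 by move=> k; rewrite gt_eqF.
move: HP HD => [HPF Popt] [t1 [t2 [t3 [HDF Dopt]]]].
have HPF' : PF R n m B1c B2c Dc fc s q r := HPF.
have Popt' : forall s' q' r', PF R n m B1c B2c Dc fc s' q' r' -> PO R m lc s r <= PO R m lc s' r'
  := Popt.
have HDF' : DF R n m B1c B2c Dc lc u1 u2 w t1 t2 t3 := HDF.
have Dopt' : forall u1' u2' w' t1' t2' t3', DF R n m B1c B2c Dc lc u1' u2' w' t1' t2' t3' ->
  dotv fc w' <= dotv fc w := Dopt.
have Hal := @align R n m B1c B2c Dc lc fc lpos _ _ _ _ _ _ _ _ _ HPF' Popt' HDF' Dopt'.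
rewrite /Dc /lc in Hal.
have Jpos : forall z' k, 0 < Jkk p chi chim chip z' k.
  move=> z' k; rewrite /Jkk sqrtr_gt0; have := sqr_ge0 (Delta p chi chim chip z' k); lra.
have Jne : forall z' k, Jkk p chi chim chip z' k != 0 by move=> z' k; rewrite gt_eqF.
have Jsq : forall z' k, Jkk p chi chim chip z' k ^+ 2 = 1 + Delta p chi chim chip z' k ^+ 2.
  move=> z' k; rewrite /Jkk sqr_sqrtr //; have := sqr_ge0 (Delta p chi chim chip z' k); lra.
have Qeq : forall k, q k 0 = Delta p chi chim chip z k * s k 0.
  move=> k; have := Hal k; rewrite [lvec _ _ _ k 0]mxE => Hk.
  have e : q k 0 = (Dm R chi chim chip *m w) k 0 * s k 0 / (2 * ell p chim chip k).
    by rewrite -Hk mulfK // mulf_neq0 // pnatr_eq0.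
  rewrite e /Delta /z -scalemxAr mxZE.
  have := ellne k; move: (ell p chim chip k) => L LL.
  field.
  by rewrite LL.
have shE : forall k, sh k 0 = Jkk p chi chim chip z k * s k 0.
  by move=> k; rewrite /sh /Jmat mul_diag_mx !mxE.
have [Hs0 [Hr0 [HB1s [HB2s [HDq HKq]]]]] := HPF'.
have Sf : \col_k (sh k 0 / Jkk p chi chim chip z k) = s.
  apply/matrixP => k j; rewrite (ord1 j) mxE shE.
  by rewrite mulrAC divff ?mul1r.
have Qf : \col_k (Delta p chi chim chip z k * sh k 0 / Jkk p chi chim chip z k) = q.
  apply/matrixP => k j; rewrite (ord1 j) mxE shE Qeq.
  have := Jne z k; move: (Jkk p chi chim chip z k) (Delta p chi chim chip z k) => J Dl JJ.
  by field.
have Hfeas : MVGS_feasible p chi chim chip fX z sh.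
  rewrite /MVGS_feasible /= Sf Qf; split.
    by move=> k; rewrite shE mulr_ge0 // ltW.
  by [].
have conv : forall z' sh', MVGS_feasible p chi chim chip fX z' sh' ->
    exists s' q' r', PF R n m B1c B2c Dc fc s' q' r' /\
      MVGS_obj p chi chim chip z' sh' = PO R m lc s' r'.
  move=> z' sh'; rewrite /MVGS_feasible /= => [[Hsh [H1 [H2 H3]]]].
  exists (\col_k (sh' k 0 / Jkk p chi chim chip z' k)),
    (\col_k (Delta p chi chim chip z' k * sh' k 0 / Jkk p chi chim chip z' k)),
    (\col_k (Delta p chi chim chip z' k ^+ 2 * (sh' k 0 / Jkk p chi chim chip z' k) / 2)).
  have sp : forall k, 0 <= sh' k 0 / Jkk p chi chim chip z' k.
    by move=> k; rewrite divr_ge0 // ltW.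
  split.
    split; first by move=> k; rewrite mxE.
    split; first by move=> k; rewrite mxE divr_ge0 // mulr_ge0 // sqr_ge0.
    split => //; split => //; split => //.
    move=> k; rewrite !mxE; split; first by rewrite divr_ge0 // mulr_ge0 // sqr_ge0.
    split; first exact: sp.
    apply: eqle.
    have := Jne z' k; move: (Jkk p chi chim chip z' k) (Delta p chi chim chip z' k) => J Dl JJ.
    by field.
  rewrite /MVGS_obj /PO /dotv mulr_sumr -big_split; apply: eq_bigr => k _.
  rewrite /lhat !mxE.
  have := Jsq z' k; have := Jne z' k.
  move: (Jkk p chi chim chip z' k) (Delta p chi chim chip z' k) => J Dl JJ Jq.
  have -> : Dl ^+ 2 = J ^+ 2 - 1 by rewrite Jq; ring.
  rewrite /= o0; by field.
have le1 : MVGS_obj p chi chim chip z sh <= PO R m lc s r.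
  rewrite /MVGS_obj /PO /dotv mulr_sumr -big_split; apply: ler_sum => k _.
  rewrite /= /lhat ?o0 shE [lc k 0]mxE.
  have [r0 [s0 hq]] := HKq k.
  rewrite Qeq in hq.
  have key : Delta p chi chim chip z k ^+ 2 * s k 0 <= 2 * r k 0.
    move: hq r0 s0; move: (Delta p chi chim chip z k) (s k 0) (r k 0) => Dl x y hq r0 s0.
    have [->|xp] := eqVneq x 0; first by rewrite mulr0; lra.
    have xpos : 0 < x by rewrite lt_neqAle eq_sym xp.
    have : (Dl ^+ 2 * x) * x <= (2 * y) * x.
      by move: hq; rewrite exprMn; congr (_ <= _); ring.
    by rewrite ler_pM2r.
  have := Jsq z k; have := ellpos k.
  move: key; move: (Jkk p chi chim chip z k) (Delta p chi chim chip z k) (ell p chim chip k)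
    (s k 0) (r k 0) => J Dl L x y key Lp Jq.
  have -> : J * L * (J * x) = L * x + L * (Dl ^+ 2 * x).
    by rewrite (_ : J * L * (J * x) = L * x * J ^+ 2); [rewrite Jq; ring | ring].
  have := ler_wpM2l (ltW Lp) key; lra.
have [s0 [q0 [r0 [PF0 E0]]]] := conv z sh Hfeas.
have eqv : MVGS_obj p chi chim chip z sh = PO R m lc s r.
  by apply: le_anti; rewrite le1 E0 (Popt' _ _ _ PF0).
split.
  split => // z' sh' Hf'.
  have [s' [q' [r' [PF' E']]]] := conv _ _ Hf'.
  by rewrite eqv E'; exact: (Popt' _ _ _ PF').
rewrite /Vmin /ZX.
rewrite (@inf_min _ _ (PO R m lc s r)); last first.
- by move=> y [z' [sh' [Hf' ->]]]; have [s' [q' [r' [PF' ->]]]] := conv _ _ Hf'; exact: (Popt' _ _ _ PF').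
- by exists z, sh; split.
rewrite (@inf_min _ _ (PO R m lc s r)) //.
- by exists s, q, r; split.
- by move=> y [s' [q' [r' [Hp ->]]]]; exact: (Popt' _ _ _ Hp).
Qed.
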